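(* In the setting of the context, suppose that $q\notin S$ and let $(\alpha,\beta)$ be the connected component of $\mathbb{R}\setminus S$ containing $q$. Let $n\in\mathbb{N}$ be such that $q\notin S(n)$, and suppose the event $\mathcal{E}^{(n)}$ occurs. Then $$\Bigl(\alpha-\frac{\lambda^n}{1-\lambda},\ \alpha\Bigr)\not\subset S.$$
   Context: Binary model: $T=\{1,2\}^*$ is the rooted binary tree of finite words (root = empty word, $|v|$ = length, $v|j$ = prefix of length $j$, $T_n$ = words of length $n$); $\{a_v\}_{|v|\ge1}$ are labels in $\{0,1\}$ (i.i.d. fair in the random model); $f(v)=\sum_{j=1}^{|v|}a_{v|j}\lambda^j$ for finite $v$, $f(\omega)=\sum_{j\ge1}a_{\omega|j}\lambda^j$ for $\omega\in\{1,2\}^{\mathbb{N}}$, and $S=f(\{1,2\}^{\mathbb{N}})$. Let $I=[0,\frac{\lambda}{1-\lambda}]$, $I(v)=f(v)+\lambda^{|v|}I$, and $S(n)=\bigcup_{|v|=n}I(v)$. Let $\lambda=1/\theta$ with $\theta$ a Pisot number (algebraic integer $>1$ whose other conjugates have modulus $<1$). Let $c_1\in(0,1)$ be a constant such that for all $n$ and all $a_1,\dots,a_n,b_1,\dots,b_n\in\{0,1\}$, $\sum a_i\lambda^i\neq\sum b_i\lambda^i$ implies $|\sum a_i\lambda^i-\sum b_i\lambda^i|\ge c_1\lambda^n$. Fix $\ell\in\mathbb{N}$ with $\frac{\lambda^{\ell+1}}{1-\lambda}<c_1$. Fix $q\in\mathbb{Q}$. For $n\ge1$: $L^{(n)}=\{v\in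 T_n: f(v)<q\}$; if $L^{(n)}\ne\emptyset$, $m^{(n)}=\max\{f(v):v\in L^{(n)}\}$ and $\mathcal{M}^{(n)}=\{v\in L^{(n)}: f(v)=m^{(n)}\}$. For $v\in T$, $T_v^+=\{vw: w\in\{1,2\}^*,\ a_{v(w|1)}=\cdots=a_{vw}=1\}$. Let $\Gamma^{(n)}=\bigcup\{T_v^+: v\in\mathcal{M}^{(n)}\}$, $\Gamma^{(n)}_j=\Gamma^{(n)}\cap T_j$, $\tau^{(n)}=\sup\{j:\Gamma^{(n)}_j\neq\emptyset\}$, and $\mathcal{E}^{(n)}=\{\tau^{(n)}<\infty \text{ and } |\Gamma^{(n)}_{\tau^{(n)}-j}|=2^{\ell-j}\text{ for } j=0,\dots,\ell\}$. *)

(* Defs.v *)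
From HB Require Import structures.
From mathcomp Require Import all_boot all_order all_algebra.
From mathcomp Require Import all_classical all_reals all_analysis.
From mathcomp Require Import complex.
Set Implicit Arguments. Unset Strict Implicit. Unset Printing Implicit Defensive.
Import Order.TTheory GRing.Theory Num.Theory numFieldNormedType.Exports.
Local Open Scope classical_set_scope.
Local Open Scope ring_scope.

(* Words of the binary tree {1,2}^*: letter 1 is encoded by [false],
   letter 2 by [true].  A finite word is a [seq bool]; |v| = size v,
   v|j = take j v.  An infinite word omega is a [nat -> bool], its prefix of
   length j is [mkseq omega j].  Labels a_v (|v| >= 1) are given by a
   function [a : seq bool -> bool] (true = 1, false = 0); the value at the
   empty word is irrelevant. *)

Section BinaryModel.
Variable R : realType.

Definition pisot (theta : R) : Prop :=
  1 < theta /\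
  exists p : {poly int},
    [/\ p \is monic,
        irreducible_poly (map_poly (intr : int -> rat) p),
        root (map_poly (intr : int -> R) p) theta &
        forall z : R[i], root (map_poly (intr : int -> R[i]) p) z ->
          z != Complex theta 0 -> `|z| < 1].

Variable lam : R.

Definition digsum (x : seq bool) : R :=
  \sum_(i < size x) (nth false x i)%:R * lam ^+ i.+1.

Variable a : seq bool -> bool.

Definition fw (v : seq bool) : R :=
  \sum_(j < size v) (a (take j.+1 v))%:R * lam ^+ j.+1.

Definition finf (omega : nat -> bool) : R :=
  limn (series (fun k : nat => (a (mkseq omega k.+1))%:R * lam ^+ k.+1)).

Definition Sset : set R := range finf.

Definition Iv (v : seq bool) : set R :=
  [set x | fw v <= x <= fw v + lam ^+ size v * (lam / (1 - lam))].

Definition Sn (n : nat) : set R :=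
  \bigcup_(v in [set v : seq bool | size v = n]) Iv v.

Variable q : rat.

Definition inL (n : nat) (v : n.-tuple bool) : bool := fw v < ratr q.

Definition inM (n : nat) (v : n.-tuple bool) : bool :=
  inL v && [forall w : n.-tuple bool, inL w ==> (fw w <= fw v)].

(* u in T_v^+ : u = v w with a_{v(w|1)} = ... = a_{vw} = 1 *)
Definition inTplus (v u : seq bool) : bool :=
  (v == take (size v) u) &&
  [forall k : 'I_(size u).+1, (size v < k)%N ==> a (take k u)].

Definition inGamma (n : nat) (u : seq bool) : bool :=
  [exists v : n.-tuple bool, inM v && inTplus v u].

Definition Gammaj (n j : nat) : {set j.-tuple bool} :=
  [set u : j.-tuple bool | inGamma n u].

(* E^(n): tau^(n) = sup{j : Gamma^(n)_j nonempty} is finite and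
   |Gamma^(n)_{tau-j}| = 2^(l-j) for j = 0..l.  (Levels tau-j < 0 would
   contain no words, so the event forces l <= tau.) *)
Definition eventE (l n : nat) : Prop :=
  exists tau : nat,
    [/\ Gammaj n tau != finset.set0,
        (forall j, (tau < j)%N -> Gammaj n j = finset.set0),
        (l <= tau)%N &
        forall j, (j <= l)%N -> #|Gammaj n (tau - j)| = (2 ^ (l - j))%N].

End BinaryModel.

(* Main.v *)
Require Import Defs.
From HB Require Import structures.
From mathcomp Require Import all_boot all_order all_algebra.
From mathcomp Require Import all_classical all_reals all_analysis.
From mathcomp Require Import complex.
From mathcomp Require Import ring lra.
Import Order.TTheory GRing.Theory Num.Theory numFieldNormedType.Exports.
Local Open Scope classical_set_scope.
Local Open Scope ring_scope.

Section Aux.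
Variable R : realType.
Variable lam : R.
Hypothesis lam0 : 0 < lam.
Hypothesis lam1 : lam < 1.
Variable a : seq bool -> bool.

Definition tt_ (w : nat -> bool) (i : nat) : R := (a (mkseq w i.+1))%:R * lam ^+ i.+1.
Definition TT (w : nat -> bool) (k : nat) : R := \sum_(0 <= i < k) tt_ w i.

Lemma take_mk (f : nat -> bool) k N : (k <= N)%N -> take k (mkseq f N) = mkseq f k.
Proof. by move=> kN; rewrite /mkseq -map_take take_iota (minn_idPl kN). Qed.

Lemma fw_mk w N : fw lam a (mkseq w N) = TT w N.
Proof.
rewrite /fw /TT.
have := big_mkord xpredT (fun j => (a (take j.+1 (mkseq w N)))%:R * lam ^+ j.+1).
move=> <-; rewrite size_mkseq; apply: eq_big_nat => i /andP[_ iN].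
by rewrite /tt_ take_mk.
Qed.

Lemma digsum_mk (f : nat -> bool) N :
  digsum lam (mkseq f N) = \sum_(0 <= i < N) (f i)%:R * lam ^+ i.+1.
Proof.
rewrite /digsum.
have := big_mkord xpredT (fun j => (nth false (mkseq f N) j)%:R * lam ^+ j.+1).
move=> <-; rewrite size_mkseq; apply: eq_big_nat => i /andP[_ iN].
by rewrite nth_mkseq.
Qed.

Lemma tt_ge0 w i : 0 <= tt_ w i.
Proof. by rewrite /tt_ mulr_ge0 // exprn_ge0 // ltW. Qed.

Lemma tt_le w i : tt_ w i <= lam ^+ i.+1.
Proof. by rewrite /tt_; case: (a _); rewrite ?mul1r ?mul0r // exprn_ge0 // ltW. Qed.

Lemma geo k N : (k <= N)%N ->
  \sum_(k <= i < N) lam ^+ i.+1 = (lam ^+ k.+1 - lam ^+ N.+1) / (1 - lam).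
Proof.
have l1 : 1 - lam != 0 by rewrite subr_eq0 eq_sym lt_eqF.
elim: N => [|N IH]; first by rewrite leqn0 => /eqP ->; rewrite big_geq // subrr mul0r.
rewrite leq_eqVlt => /orP[/eqP ->|]; first by rewrite big_geq // subrr mul0r.
rewrite ltnS => kN; rewrite big_nat_recr //= IH //.
apply: (mulIf l1); rewrite mulrDl -!mulrA mulVf // !mulr1 !exprS; ring.
Qed.

Lemma TT_split w k N : (k <= N)%N -> TT w N = TT w k + \sum_(k <= i < N) tt_ w i.
Proof. by move=> kN; rewrite /TT (big_cat_nat (leq0n k) kN). Qed.

Lemma TT_mono w k N : (k <= N)%N -> TT w k <= TT w N.
Proof.
move=> kN; rewrite (@TT_split w _ _ kN) lerDl; apply: sumr_ge0 => i _; exact: tt_ge0.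
Qed.

Lemma geo_le k N : \sum_(k <= i < N) lam ^+ i.+1 <= lam ^+ k.+1 / (1 - lam).
Proof.
have l1 : 0 < 1 - lam by rewrite subr_gt0.
have e0 : forall j, 0 <= lam ^+ j by move=> j; apply: exprn_ge0; apply: ltW.
case: (leqP k N) => kN; last first.
  rewrite big_geq; last exact: ltnW.
  by apply: divr_ge0; [exact: e0|exact: ltW].
rewrite geo //; apply: ler_wpM2r; first by rewrite invr_ge0 ltW.
by rewrite gerBl.
Qed.

Lemma TT_le w k N : TT w N <= TT w k + lam ^+ k.+1 / (1 - lam).
Proof.
have l1 : 0 < 1 - lam by rewrite subr_gt0.
case: (leqP k N) => kN.
  rewrite (@TT_split w _ _ kN) lerD2l (le_trans _ (geo_le k N)) //.
  by apply: ler_sum => i _; exact: tt_le.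
apply: (le_trans (@TT_mono w _ _ (ltnW kN))); rewrite lerDl.
by apply: divr_ge0; [apply: exprn_ge0; exact: ltW|exact: ltW].
Qed.

Lemma series_TT w : series (tt_ w) = TT w.
Proof. by []. Qed.

Lemma TT_cvg w : cvgn (TT w).
Proof.
apply: nondecreasing_is_cvgn; first by move=> x y; exact: TT_mono.
exists (TT w 0 + lam ^+ 1 / (1 - lam)) => _ [N _ <-]; exact: TT_le.
Qed.

Lemma finf_ge w k : TT w k <= finf lam a w.
Proof.
rewrite /finf series_TT; apply: nondecreasing_cvgn_le => //.
  by move=> x y; exact: TT_mono.
exact: TT_cvg.
Qed.

Lemma finf_le w k : finf lam a w <= TT w k + lam ^+ k.+1 / (1 - lam).
Proof.
rewrite /finf series_TT; apply: limr_le; first exact: TT_cvg.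
by apply: nearW => N; exact: TT_le.
Qed.

End Aux.
Lemma fill (tau K l : nat) (A : {set tau.-tuple bool}) (y0 : seq bool)
  (x : tau.-tuple bool) :
  (K + l = tau)%N -> #|A| = (2 ^ l)%N -> (forall u, u \in A -> take K u = y0) ->
  take K x = y0 -> x \in A.
Proof.
move=> Kl cA hA hx; apply/negPn/negP => xA.
pose phi (u : tau.-tuple bool) : l.-tuple bool := [tuple nth false u (K + i) | i < l].
have inj : {in x |: A &, injective phi}.
  move=> u u' uA u'A eq; apply: val_inj; apply: (@eq_from_nth _ false).
    by rewrite !size_tuple.
  move=> i; rewrite size_tuple => itau.
  have tu : take K u = take K u'.
    move: uA u'A; rewrite !in_setU1 => /orP[/eqP->|/hA->] /orP[/eqP->|/hA->] //.
  case: (ltnP i K) => iK.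
    by rewrite -(nth_take false iK) tu nth_take.
  have il : (i - K < l)%N by rewrite ltn_subLR // Kl.
  have := congr1 (fun t => tnth t (Ordinal il)) eq.
  by rewrite /phi !tnth_mktuple /= subnKC.
have := card_in_imset inj; rewrite cardsU1 xA cA => e.
have := max_card (mem (phi @: (x |: A))); rewrite e card_tuple card_bool.
by rewrite add1n ltnn.
Qed.
Definition tup N (w : nat -> bool) : N.-tuple bool :=
  @Tuple N bool (mkseq w N) (introT eqP (size_mkseq w N)).

Lemma tuple_mk j (u : j.-tuple bool) : (u : seq bool) = mkseq (nth false u) j.
Proof. by have := mkseq_nth false u; rewrite size_tuple => ->. Qed.

Lemma inTplus_mk a n N (v : n.-tuple bool) w : (n <= N)%N ->
  inTplus a v (mkseq w N) <->
  (val v = mkseq w n /\ forall k, (n < k <= N)%N -> a (mkseq w k)).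
Proof.
move=> nN; rewrite /inTplus size_tuple take_mk //; split.
  move=> /andP[/eqP ev /forallP H]; split => // k /andP[nk kN].
  have kN' : (k < (size (mkseq w N)).+1)%N by rewrite size_mkseq ltnS.
  by have := H (Ordinal kN'); rewrite /= nk /= take_mk.
move=> [-> H]; rewrite eqxx /=; apply/forallP => k; apply/implyP => nk.
have kN : (k <= N)%N by have := ltn_ord k; rewrite ltnS => /leq_trans; apply; rewrite size_mkseq.
by rewrite take_mk //; apply: H; rewrite nk kN.
Qed.

Section G.
Variable R : realType.
Variables (lam : R) (a : seq bool -> bool) (q : rat).

Lemma inGamma_mk n N w : (n <= N)%N ->
  inGamma lam a q n (mkseq w N) <->
  (inM lam a q (tup n w) /\ forall k, (n < k <= N)%N -> a (mkseq w k)).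
Proof.
move=> nN; split.
  move=> /existsP[v /andP[Mv /(@inTplus_mk a n N v w nN)[ev H]]].
  have e : v = tup n w by apply: val_inj.
  by rewrite -e; split.
move=> [Mv H]; apply/existsP; exists (tup n w); rewrite Mv /=.
by apply/(@inTplus_mk a n N (tup n w) w nN).
Qed.

Lemma inGamma_size n u : inGamma lam a q n u -> (n <= size u)%N.
Proof.
move=> /existsP[v /andP[_ /andP[/eqP e _]]].
have -> : n = size (take n u) by rewrite -{2}(size_tuple v) -e size_tuple.
by rewrite size_take; case: ifP => // /ltnW.
Qed.

Lemma inM_le n (v w : n.-tuple bool) :
  inM lam a q v -> inL lam a q w -> fw lam a w <= fw lam a v.
Proof. by move=> /andP[_ /forallP H] Lw; have := H w; rewrite Lw. Qed.

Lemma inM_eq n (v w : n.-tuple bool) :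
  inM lam a q v -> inM lam a q w -> fw lam a w = fw lam a v.
Proof.
move=> Mv Mw; apply/le_anti; rewrite !inM_le //.
  by case/andP: Mv. by case/andP: Mw.
Qed.

Lemma inM_of n (v : n.-tuple bool) (v0 : n.-tuple bool) :
  inM lam a q v0 -> inL lam a q v -> fw lam a v = fw lam a v0 -> inM lam a q v.
Proof.
move=> /andP[_ /forallP H] Lv e; rewrite /inM Lv /=; apply/forallP => w.
by rewrite e; exact: H.
Qed.

End G.

Theorem lemma4p3 (R : realType) (theta : R) (a : seq bool -> bool)
    (c1 : R) (l : nat) (q : rat) (alpha beta : R) (n : nat) :
  pisot theta ->
  0 < c1 < 1 ->
  (forall (m : nat) (x y : m.-tuple bool),
      digsum theta^-1 x != digsum theta^-1 y ->
      c1 * theta^-1 ^+ m <= `|digsum theta^-1 x - digsum theta^-1 y|) ->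
  theta^-1 ^+ l.+1 / (1 - theta^-1) < c1 ->
  ~ Sset theta^-1 a (ratr q) ->
  connected_component (~` Sset theta^-1 a) (ratr q) = `]alpha, beta[%classic ->
  (1 <= n)%N ->
  ~ Sn theta^-1 a n (ratr q) ->
  eventE theta^-1 a q l n ->
  ~ (`]alpha - theta^-1 ^+ n / (1 - theta^-1), alpha[%classic `<=` Sset theta^-1 a).
Proof.
move=> [th1 _] /andP[c10 c11] sep hl Sq comp n1 Snq [tau [G0 _ ltau cG]].
have th0 : 0 < theta by apply: lt_trans th1.
set lam := theta^-1 in sep hl Sq comp Snq cG G0 *.
have lam0 : 0 < lam by rewrite /lam invr_gt0.
have lam1 : lam < 1 by rewrite /lam invf_lt1.
have l1 : 0 < 1 - lam by rewrite subr_gt0.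
have l1n : 1 - lam != 0 by rewrite gt_eqF.
have Tge := @finf_ge R lam lam0 lam1 a.
have Tle := @finf_le R lam lam0 lam1 a.
have fwT := @fw_mk R lam a.
have e0 : forall j, 0 <= lam ^+ j by move=> j; apply: exprn_ge0; exact: ltW.
case/set0Pn: G0 => u; rewrite inE => Gu.
pose w0 := nth false u.
have eu : (u : seq bool) = mkseq w0 tau by exact: tuple_mk.
rewrite eu in Gu.
have ntau : (n <= tau)%N by have := @inGamma_size R lam a q n _ Gu; rewrite size_mkseq.
have [M0 ones0] := (@inGamma_mk R lam a q n tau w0 ntau).1 Gu.
pose m := fw lam a (tup n w0).
have mdef : fw lam a (mkseq w0 n) = m by [].
have mT : m = TT R lam a w0 n by rewrite -mdef fwT.
have mq : m < ratr q by case/andP: M0.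
have qbig : m + lam ^+ n.+1 / (1 - lam) < ratr q.
  rewrite ltNge; apply/negP => hq; apply: Snq.
  exists (mkseq w0 n); first by rewrite /= size_mkseq.
  rewrite /Iv /= size_mkseq mdef (ltW mq) /= mulrA -exprSr.
  exact: hq.
pose K := (tau - l)%N.
have hK : (K + l = tau)%N by rewrite subnK.
have hKt : (K <= tau)%N by rewrite leq_subr.
have cK : #|Gammaj lam a q n K| = 1%N.
  by have := cG l (leqnn l); rewrite subnn => h; exact: h.
have cT : #|Gammaj lam a q n tau| = (2 ^ l)%N.
  by have := cG 0%N (leq0n l); rewrite !subn0 => h; exact: h.
have nK : (n <= K)%N.
  have : Gammaj lam a q n K != finset.set0 by rewrite -card_gt0 cK.
  case/set0Pn => y; rewrite inE => /(@inGamma_size R lam a q n); by rewrite size_tuple.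
have pref : forall w j N, (n <= j)%N -> (j <= N)%N ->
    inGamma lam a q n (mkseq w N) -> inGamma lam a q n (mkseq w j).
  move=> w j N nj jN /(@inGamma_mk R lam a q n N w (leq_trans nj jN)) [Mw H].
  apply/(@inGamma_mk R lam a q n j w nj); split => // k /andP[nk kj].
  by apply: H; rewrite nk (leq_trans kj jN).
have [y0 Ey] : exists y0, Gammaj lam a q n K = [set y0]%SET.
  by apply/cards1P; rewrite cK.
have inGK : forall w, inGamma lam a q n (mkseq w K) -> mkseq w K = mkseq w0 K.
  move=> w Gw.
  have h1 : tup K w \in Gammaj lam a q n K by rewrite inE; exact: Gw.
  have h2 : tup K w0 \in Gammaj lam a q n K.
    by rewrite inE; exact: (pref w0 K tau nK hKt Gu).
  move: h1 h2; rewrite Ey !inE => /eqP e1 /eqP e2.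
  by have := congr1 val (etrans e1 (esym e2)).
have thr : forall w, inGamma lam a q n (mkseq w K) -> inGamma lam a q n (mkseq w tau).
  move=> w Gw.
  have : tup tau w \in Gammaj lam a q n tau.
    apply: (@fill tau K l _ (mkseq w0 K) (tup tau w) hK cT).
      move=> v; rewrite inE (tuple_mk _ v) take_mk // => Gv.
      by apply: inGK; apply: (pref _ K tau nK hKt).
    by rewrite /= take_mk //; apply: inGK.
  by rewrite inE.
pose g j := m + \sum_(n <= i < j) lam ^+ i.+1.
have Gval : forall w j, (n <= j)%N -> inGamma lam a q n (mkseq w j) ->
    TT R lam a w j = g j.
  move=> w j nj /(@inGamma_mk R lam a q n j w nj) [Mw H].
  rewrite (@TT_split R lam a w n j nj) /g.
  have := @inM_eq R lam a q n _ _ M0 Mw; rewrite /= fwT => ->; congr (_ + _).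
  apply: eq_big_nat => i /andP[ni ij]; rewrite /tt_ H ?mul1r //.
  by rewrite ltnS ni ij.
have NotG : forall w, finf lam a w < ratr q ->
    ~~ inGamma lam a q n (mkseq w K) -> TT R lam a w K < g K.
  move=> w Fq nG.
  have Lw : inL lam a q (tup n w).
    by rewrite /inL /= fwT; exact: le_lt_trans (Tge w n) Fq.
  have := @inM_le R lam a q n _ _ M0 Lw; rewrite /= !fwT -mT le_eqVlt.
  case/orP => [/eqP eqm|ltm]; last first.
    rewrite (@TT_split R lam a w n K nK) /g; apply: ltr_leD => //.
    by apply: ler_sum => i _; exact: tt_le.
  have Mw : inM lam a q (tup n w).
    by apply: (@inM_of R lam a q n _ _ M0 Lw); rewrite /= !fwT eqm mT.
  case: (pselect (exists k, ((n < k <= K)%N) && ~~ a (mkseq w k))) => [[k]|Hn];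
    last first.
    exfalso; move/negP: nG; apply; apply/(@inGamma_mk R lam a q n K w nK).
    split => // k hk; apply/negPn/negP => nak; apply: Hn; exists k.
    by rewrite hk nak.
  case: k => [|k]; first by rewrite ltn0.
  move=> /andP[/andP[nk kK] nak].
  have sp : forall F : nat -> R, \sum_(n <= i < K) F i =
      \sum_(n <= i < k) F i + (F k + \sum_(k.+1 <= i < K) F i).
    move=> F; rewrite (@big_cat_nat _ _ _ k) //=; last exact: ltnW.
    by rewrite (@big_ltn _ _ _ k K).
  rewrite (@TT_split R lam a w n K nK) /g eqm !sp ltrD2l.
  have -> : tt_ R lam a w k = 0 by rewrite /tt_ (negbTE nak) mul0r.
  have s1 : \sum_(n <= i < k) tt_ R lam a w i <= \sum_(n <= i < k) lam ^+ i.+1.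
    by apply: ler_sum => i _; exact: tt_le.
  have s2 : \sum_(k.+1 <= i < K) tt_ R lam a w i <= \sum_(k.+1 <= i < K) lam ^+ i.+1.
    by apply: ler_sum => i _; exact: tt_le.
  have s3 : 0 < lam ^+ k.+1 by apply: exprn_gt0.
  lra.
pose delta := lam ^+ K * (c1 - lam ^+ l.+1 / (1 - lam)).
have d0 : 0 < delta by apply: mulr_gt0; [exact: exprn_gt0|rewrite subr_gt0].
have gKt : g tau = g K + (lam ^+ K.+1 - lam ^+ tau.+1) / (1 - lam).
  by rewrite /g (@big_cat_nat _ _ _ K) //= addrA (@geo R lam lam1 K tau hKt).
have et : lam ^+ tau.+1 = lam ^+ K * lam ^+ l.+1 by rewrite -exprD addnS hK.
have claimA : forall w, finf lam a w < ratr q ->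
    inGamma lam a q n (mkseq w tau) \/ finf lam a w <= g tau - delta.
  move=> w Fq; case: (boolP (inGamma lam a q n (mkseq w K))) => Gw.
    by left; exact: thr.
  right.
  have lt := NotG w Fq Gw.
  have gK := Gval w0 K nK (pref w0 K tau nK hKt Gu).
  pose x := tup K (fun i => a (mkseq w i.+1)).
  pose y := tup K (fun i => a (mkseq w0 i.+1)).
  have dx : digsum lam x = TT R lam a w K by rewrite /= digsum_mk.
  have dy : digsum lam y = TT R lam a w0 K by rewrite /= digsum_mk.
  have hs := sep K x y; rewrite dx dy gK in hs.
  have := hs (negbT (lt_eqF lt)).
  rewrite ler0_norm; last by rewrite subr_le0 ltW.
  rewrite opprB => hs'.
  have Fle := Tle w K.
  have E : g tau - delta = g K + lam ^+ K.+1 / (1 - lam) - c1 * lam ^+ K.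
    by rewrite gKt et /delta; field.
  rewrite E; lra.
pose s := finf lam a w0.
have sg : g tau <= s by rewrite -(Gval w0 tau ntau Gu); exact: Tge.
have sq : s < ratr q.
  by apply: (le_lt_trans (Tle w0 n)); rewrite -mT; exact: qbig.
have Cq : connected_component (~` Sset lam a) (ratr q) (ratr q).
  exact: connected_component_refl.
rewrite comp /= in_itv /= in Cq; case/andP: Cq => aq qb.
have Csub := @connected_component_sub _ (~` Sset lam a) (ratr q).
rewrite comp in Csub.
have sa : s <= alpha.
  rewrite leNgt; apply/negP => as_; apply: (Csub s).
    by rewrite /= in_itv /= as_ (lt_trans sq qb).
  by exists w0.
have aH : alpha <= g tau + lam ^+ tau.+1 / (1 - lam).
  rewrite leNgt; apply/negP => Ha.
  have B : `[alpha, ratr q]%classic `<=`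
      connected_component (~` Sset lam a) (ratr q).
    apply: connected_component_max.
    - by rewrite /= in_itv /= (ltW aq) lexx.
    - move=> x; rewrite /= in_itv /= => /andP[ax xq] [w _ ew].
      move: xq; rewrite le_eqVlt => /orP[/eqP xq|xq].
        by apply: Sq; exists w; rewrite // ew xq.
      rewrite -ew in ax xq.
      case: (claimA w xq) => [Gw|hw].
        have := Tle w tau; rewrite (Gval w tau ntau Gw) => h; lra.
      lra.
    - by apply/connected_intervalP; exact: interval_is_interval.
  have := B alpha; rewrite comp /= !in_itv /= lexx ltxx (ltW aq).
  by move=> /(_ isT).
have dK : delta < lam ^+ K.
  rewrite /delta -[X in _ < X]mulr1 ltr_pM2l; last exact: exprn_gt0.
  have : 0 <= lam ^+ l.+1 / (1 - lam) by apply: divr_ge0 => //; exact: ltW.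
  lra.
have tK : lam ^+ tau.+1 <= lam * lam ^+ K.
  by rewrite -exprS; apply: ler_wiXn2l; [exact: ltW|exact: ltW|rewrite ltnS].
have Kn : lam ^+ K <= lam ^+ n.
  by apply: ler_wiXn2l; [exact: ltW|exact: ltW|].
have key : lam ^+ tau.+1 / (1 - lam) + delta / 2 < lam ^+ n / (1 - lam).
  have E1 : lam ^+ tau.+1 / (1 - lam) + delta / 2 =
      (lam ^+ tau.+1 + delta * (1 - lam) / 2) / (1 - lam) by field.
  rewrite E1 ltr_pM2r ?invr_gt0 //.
  have h1 : delta * (1 - lam) < lam ^+ K * (1 - lam) by rewrite ltr_pM2r.
  have h2 : lam * lam ^+ K + lam ^+ K * (1 - lam) = lam ^+ K by ring.
  have h3 : 0 <= lam ^+ K * (1 - lam) by apply: mulr_ge0 => //; exact: ltW.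
  lra.
move=> sub.
pose p := g tau - delta / 2.
have hp : `]alpha - lam ^+ n / (1 - lam), alpha[%classic p.
  rewrite /= in_itv /=; apply/andP; split; rewrite /p; lra.
case: (sub p hp) => w _ ew.
have pq : p < ratr q by rewrite /p; lra.
rewrite -ew in pq.
case: (claimA w pq) => [Gw|hw].
  have := Tge w tau; rewrite (Gval w tau ntau Gw) ew /p; lra.
move: hw; rewrite ew /p; lra.
Qed.
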